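(* Let $n$ be a positive integer, let $u:2^{[n]}\to\mathbb{R}_{\ge 0}$ be a normalized ($u(\emptyset)=0$), monotone, submodular and second-order supermodular set function, and let $c:2^{[n]}\to\mathbb{R}_{\ge 0}$ be the modular set function $c(S)=\sum_{i\in S}c_i$ with $c_1,\dots,c_n>0$. Let $(l_1,\dots,l_n)$ be a locally optimal permutation of $[n]$ (in the sense defined in the context) and let $(o_1,\dots,o_n)$ be an optimal permutation for Min-Sum Submodular Cover on $(u,c)$. Write $L_j=\{l_1,\dots,l_j\}$ and $O_i=\{o_1,\dots,o_i\}$ (with $L_0=O_0=\emptyset$), and $c(o_i)=c(\{o_i\})$. For $i,j\in[n]$ define $$b_{ij}=u(o_i\mid O_{i-1}\cup L_{j-1})-u(o_i\mid O_{i-1}\cup L_{j-1}\cup\{l_j\}),$$ which also equals $u(l_j\mid O_{i-1}\cup L_{j-1})-u(l_j\mid O_{i-1}\cup L_{j-1}\cup\{o_i\})$. Then for all $i,j\in[n]$, $$\sum_{r=j}^n c(L_r)\sum_{s=1}^n b_{sr}\;\le\;[c(o_i)+c(L_{j-1})]\sum_{r=j}^n b_{ir}+\sum_{r=j}^n [c(o_i)+c(L_r)]\sum_{\substack{s=1\\ s\ne i}}^n b_{sr}.$$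
   Context: Notation: $f(e\mid S):=f(S\cup\{e\})-f(S)$. A set function $f$ on $2^{[n]}$ is monotone if $f(S\cup\{i\})\ge f(S)$, submodular if $f(i\mid S)\ge f(i\mid S\cup\{j\})$, and second-order supermodular if $f(i\mid S)-f(i\mid S\cup\{j\})\ge f(i\mid S\cup\{k\})-f(i\mid S\cup\{k,j\})$, for all $S\subseteq[n]$ and $i,j,k\in[n]\setminus S$. Min-Sum Submodular Cover on $(u,c)$: minimize over permutations of $[n]$ the objective $\sum_{i=1}^n c(S_i)(u(S_i)-u(S_{i-1}))$, $S_i$ the set of the first $i$ elements, $S_0=\emptyset$. Pseudo-neighbors and local optimality: a pseudo-neighbor of a permutation $\pi$ is a sequence of length $n+1$ obtained by taking the element at some position $i$ of $\pi$ and inserting a second copy of it at some position $j<i$. Its objective value is $\sum_{k=1}^{n+1} c'(S_k)[u(S_k)-u(S_{k-1})]$, where $S_k$ is its prefix of length $k$, $u(S_k)$ is $u$ evaluated on the set of distinct elements of $S_k$, and $c'(S_k)=\sum_{t=1}^k c(\{s_t\})$ with $s_t$ the element in position $t$ (so both copies are charged when both lie in the prefix). A permutation is locally optimal if no pseudo-neighbor has strictly lower objective value than it. *)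

(* Defs.v *)
(* Ground set [n] = 'I_n; positions are 0-based. *)
From mathcomp Require Import all_boot all_order all_algebra all_fingroup.
Set Implicit Arguments. Unset Strict Implicit. Unset Printing Implicit Defensive.
Import Order.TTheory GRing.Theory Num.Theory.
Local Open Scope ring_scope.

Section Defs.
Variables (R : realFieldType) (n : nat).
Implicit Types (u : {set 'I_n} -> R) (S : {set 'I_n}).

Definition marg u (e : 'I_n) S : R := u (e |: S) - u S.

Definition normalized u := u set0 = 0.
Definition nonneg_sf u := forall S, 0 <= u S.
Definition monotone_sf u := forall S (i : 'I_n), i \notin S -> u S <= u (i |: S).
Definition submodular_sf u := forall S (i j : 'I_n), i \notin S -> j \notin S ->
  marg u i (j |: S) <= marg u i S.
Definition second_order_supermodular u := forall S (i j k : 'I_n),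
  i \notin S -> j \notin S -> k \notin S ->
  marg u i (k |: S) - marg u i (j |: (k |: S)) <= marg u i S - marg u i (j |: S).

Definition modc (cc : 'I_n -> R) S : R := \sum_(i in S) cc i.

Definition pprefix (p : {perm 'I_n}) (k : nat) : {set 'I_n} :=
  [set p i | i : 'I_n & (i < k)%N].

Definition perm_obj u (cc : 'I_n -> R) (p : {perm 'I_n}) : R :=
  \sum_(k < n) modc cc (pprefix p k.+1) * (u (pprefix p k.+1) - u (pprefix p k)).

Definition is_optimal u cc (p : {perm 'I_n}) :=
  forall q : {perm 'I_n}, perm_obj u cc p <= perm_obj u cc q.

Definition perm_seq (p : {perm 'I_n}) : seq 'I_n := [seq p i | i <- enum 'I_n].

Definition pseudo_neighbor (p : {perm 'I_n}) (i : 'I_n) (j : nat) : seq 'I_n :=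
  take j (perm_seq p) ++ p i :: drop j (perm_seq p).

(* objective of a sequence (with repetitions): c' charges every copy in the pprefix *)
Definition seq_obj u (cc : 'I_n -> R) (s : seq 'I_n) : R :=
  \sum_(k < size s) (\sum_(x <- take k.+1 s) cc x) *
     (u [set x in take k.+1 s] - u [set x in take k s]).

Definition locally_optimal u cc (p : {perm 'I_n}) :=
  forall (i : 'I_n) (j : nat), (j < i)%N ->
    ~ (seq_obj u cc (pseudo_neighbor p i j) < perm_obj u cc p).

(* b_{ij} with 0-based indices: O_{i-1} = pprefix o i, L_{j-1} = pprefix l j *)
Definition bcoef u (o l : {perm 'I_n}) (i j : 'I_n) : R :=
  marg u (o i) (pprefix o i :|: pprefix l j)
  - marg u (o i) (l j |: (pprefix o i :|: pprefix l j)).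

End Defs.

(* Main.v *)
Require Import Defs.
From mathcomp Require Import all_boot all_order all_algebra all_fingroup.
From mathcomp Require Import ring.
Import Order.TTheory GRing.Theory Num.Theory.
Local Open Scope ring_scope.

Section Aux.
Variables (R : realFieldType) (n : nat).

Lemma setU1_mem (x : 'I_n) (A : {set 'I_n}) : x \in A -> x |: A = A.
Proof. by move=> xA; apply/setP=> y; rewrite !inE; case: eqP => // ->. Qed.

Lemma chain_le (f : {set 'I_n} -> R) :
  (forall (A : {set 'I_n}) x, f (x |: A) <= f A) -> forall A B : {set 'I_n}, A \subset B -> f B <= f A.
Proof.
move=> step A B; move Hk: #|B| => k; elim: k B Hk => [|k IH] B Hk sAB.
  have B0 : B = set0 by apply/eqP; rewrite -cards_eq0 Hk.
  have A0 : A = set0 by apply/eqP; rewrite -subset0 -B0.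
  by rewrite B0 A0.
case: (boolP (B \subset A)) => sBA.
  by have -> : B = A by apply/eqP; rewrite eqEsubset sBA sAB.
have [x xB xA] := subsetPn sBA.
rewrite -(setD1K xB); apply: le_trans (step _ _) _; apply: IH.
  by move: Hk; rewrite (cardsD1 x) xB => -[].
by rewrite subsetD1 sAB xA.
Qed.

Lemma mono_sub (u : {set 'I_n} -> R) : monotone_sf u ->
  forall A B : {set 'I_n}, A \subset B -> u A <= u B.
Proof.
move=> hm A B sAB; rewrite -lerN2.
apply: (chain_le (fun S => - u S)) sAB => S x; rewrite lerN2.
by case: (boolP (x \in S)) => xS; [rewrite setU1_mem | exact: hm].
Qed.

Lemma marg_mem (u : {set 'I_n} -> R) e (A : {set 'I_n}) : e \in A -> marg u e A = 0.
Proof. by move=> eA; rewrite /marg setU1_mem // subrr. Qed.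

Lemma marg_ge0 (u : {set 'I_n} -> R) : monotone_sf u -> forall e (A : {set 'I_n}), 0 <= marg u e A.
Proof.
move=> hm e A; case: (boolP (e \in A)) => eA; first by rewrite marg_mem.
by rewrite /marg subr_ge0; exact: hm.
Qed.

Lemma sub_sub (u : {set 'I_n} -> R) : monotone_sf u -> submodular_sf u ->
  forall e (A B : {set 'I_n}), A \subset B -> marg u e B <= marg u e A.
Proof.
move=> hm hs e A B sAB; apply: (chain_le (marg u e)) sAB => S x.
case: (boolP (e \in S)) => eS.
  by rewrite !marg_mem // inE eS orbT.
case: (boolP (x \in S)) => xS; first by rewrite setU1_mem.
case: (eqVneq e x) => [->|nex].
  by rewrite marg_mem ?setU11 //; exact: marg_ge0.
exact: hs.
Qed.

Lemma modc_U1 (cc : 'I_n -> R) x (A : {set 'I_n}) : x \notin A -> modc cc (x |: A) = cc x + modc cc A.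
Proof. by move=> xA; rewrite /modc big_setU1. Qed.

Lemma mem_pprefix (p : {perm 'I_n}) k x : (x \in pprefix p k) = ((p^-1)%g x < k)%N.
Proof.
apply/imsetP/idP => [[y yk ->]| h]; first by rewrite permK; move: yk; rewrite inE.
by exists ((p^-1)%g x); [rewrite inE | rewrite permKV].
Qed.

Lemma pprefix0 (p : {perm 'I_n}) : pprefix p 0 = set0.
Proof. by apply/setP => x; rewrite mem_pprefix inE. Qed.

Lemma pprefixT (p : {perm 'I_n}) : pprefix p n = setT.
Proof. by apply/setP => x; rewrite mem_pprefix inE ltn_ord. Qed.

Lemma pprefixS (p : {perm 'I_n}) (r : 'I_n) : pprefix p r.+1 = p r |: pprefix p r.
Proof.
apply/setP => x; rewrite in_setU1 (mem_pprefix p r.+1) (mem_pprefix p r) ltnS leq_eqVlt.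
case: (eqVneq x (p r)) => [->|ne]; first by rewrite permK !eqxx.
congr (_ || _); case: eqP => // h; move: ne.
have h2 : (p^-1)%g x = r by apply: val_inj.
by rewrite -h2 permKV eqxx.

Qed.

Lemma notin_pprefix (p : {perm 'I_n}) (r : 'I_n) : p r \notin pprefix p r.
Proof. by rewrite mem_pprefix permK ltnn. Qed.

Lemma cLS (cc : 'I_n -> R) (p : {perm 'I_n}) (r : 'I_n) :
  modc cc (pprefix p r.+1) - modc cc (pprefix p r) = cc (p r).
Proof. by rewrite pprefixS modc_U1 ?notin_pprefix // addrK. Qed.

Lemma size_perm_seq (p : {perm 'I_n}) : size (perm_seq p) = n.
Proof. by rewrite /perm_seq size_map size_enum_ord. Qed.

Lemma nth_perm_seq (p : {perm 'I_n}) x0 (r : 'I_n) : nth x0 (perm_seq p) r = p r.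
Proof. by rewrite /perm_seq (nth_map x0) ?size_enum_ord // nth_ord_enum. Qed.

Lemma mem_perm_seq (p : {perm 'I_n}) x : x \in perm_seq p.
Proof. by rewrite /perm_seq -[x](permKV p) mem_map ?mem_enum //; exact: perm_inj. Qed.

Lemma pprefix_take (p : {perm 'I_n}) k : pprefix p k = [set x in take k (perm_seq p)].
Proof.
apply/setP => x; rewrite inE mem_pprefix /perm_seq -map_take.
by rewrite -[x in x \in _](permKV p) mem_map ?in_take ?mem_enum ?index_enum_ord //; exact: perm_inj.
Qed.

Lemma abel1 (C V : nat -> R) N : C 0%N = 0 ->
  \sum_(0 <= k < N) C k.+1 * (V k.+1 - V k) =
  \sum_(0 <= k < N) (C k.+1 - C k) * (V N - V k).
Proof.
move=> C0; elim: N => [|N IH]; first by rewrite !big_geq.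
rewrite !big_nat_recr //= IH.
have -> : \sum_(0 <= k < N) (C k.+1 - C k) * (V N.+1 - V k) =
  \sum_(0 <= k < N) (C k.+1 - C k) * (V N - V k) +
  (\sum_(0 <= k < N) (C k.+1 - C k)) * (V N.+1 - V N).
  rewrite mulr_suml -big_split /=; apply: eq_bigr => k _; ring.
rewrite telescope_sumr // C0 subr0; ring.
Qed.

Lemma abel2 (A h : nat -> R) j N : (j <= N)%N ->
  \sum_(j <= r < N) (A r.+1 - A j) * (h r - h r.+1) =
  \sum_(j <= k < N) (A k.+1 - A k) * h k - (A N - A j) * h N.
Proof.
elim: N => [|N IH] hj.
  by move: hj; rewrite leqn0 => /eqP ->; rewrite !big_geq // subrr mul0r subrr.
case: (eqVneq j N.+1) => [->|ne].
  by rewrite !big_geq // subrr mul0r subrr.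
have jN : (j <= N)%N by rewrite -ltnS ltn_neqAle ne hj.
rewrite !big_nat_recr //= IH //; ring.
Qed.

Lemma sum_geq (F : nat -> R) (j : 'I_n) :
  \sum_(r : 'I_n | (j <= r)%N) F r = \sum_(j <= r < n) F r.
Proof. by rewrite big_geq_mkord; apply: eq_bigl. Qed.

Lemma seq_obj_abel (u : {set 'I_n} -> R) cc (s : seq 'I_n) x0 :
  seq_obj u cc s = \sum_(0 <= k < size s) cc (nth x0 s k) *
     (u [set x in s] - u [set x in take k s]).
Proof.
rewrite /seq_obj -(big_mkord xpredT (fun k => (\sum_(x <- take k.+1 s) cc x) *
  (u [set x in take k.+1 s] - u [set x in take k s]))).
rewrite (abel1 (fun k => \sum_(x <- take k s) cc x) (fun k => u [set x in take k s])) ?take0 ?big_nil //.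
apply: eq_big_nat => k /andP[_ ks]; rewrite take_size (take_nth x0 ks) big_rcons /=.
by rewrite addrAC subrr add0r.
Qed.

Lemma set_cat_cons (a b : seq 'I_n) y : [set x in a ++ y :: b] = y |: [set x in a ++ b].
Proof. by apply/setP => x; rewrite !inE !mem_cat in_cons orbCA. Qed.

End Aux.

Theorem lemma1 (R : realFieldType) (n : nat) (hn : (0 < n)%N)
  (u : {set 'I_n} -> R) (cc : 'I_n -> R)
  (hu0 : normalized u) (hunn : nonneg_sf u) (humon : monotone_sf u)
  (husub : submodular_sf u) (husos : second_order_supermodular u)
  (hcc : forall i, 0 < cc i)
  (l o : {perm 'I_n})
  (hl : locally_optimal u cc l) (ho : is_optimal u cc o) :
  forall i j : 'I_n,
    \sum_(r : 'I_n | (j <= r)%N)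
        modc cc (pprefix l (r.+1)%N) * \sum_(s : 'I_n) bcoef u o l s r
    <= (modc cc [set o i] + modc cc (pprefix l j)) *
         \sum_(r : 'I_n | (j <= r)%N) bcoef u o l i r
       + \sum_(r : 'I_n | (j <= r)%N)
           (modc cc [set o i] + modc cc (pprefix l (r.+1)%N)) *
             \sum_(s : 'I_n | s != i) bcoef u o l s r.
Proof.
move=> i j.
pose i0 := Ordinal hn.
have jn : (j <= n)%N by exact: ltnW (ltn_ord j).
have hb : forall r : 'I_n, bcoef u o l i r =
   marg u (o i) (pprefix o i :|: pprefix l r) - marg u (o i) (pprefix o i :|: pprefix l r.+1).
  by move=> r; rewrite /bcoef pprefixS setUCA.
have hsum : forall r : 'I_n, \sum_s bcoef u o l s r = u (pprefix l r.+1) - u (pprefix l r).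
  move=> r.
  have E : forall s : 'I_n, bcoef u o l s r =
     (u (pprefix o s.+1 :|: pprefix l r) - u (pprefix o s :|: pprefix l r))
     - (u (pprefix o s.+1 :|: pprefix l r.+1) - u (pprefix o s :|: pprefix l r.+1)).
    move=> s; rewrite /bcoef /marg.
    have -> : l r |: (pprefix o s :|: pprefix l r) = pprefix o s :|: pprefix l r.+1.
      by rewrite pprefixS setUCA.
    by rewrite !setUA -!pprefixS.
  rewrite (eq_bigr _ (fun s _ => E s)).
  rewrite -(big_mkord xpredT (fun s => (u (pprefix o s.+1 :|: pprefix l r) - u (pprefix o s :|: pprefix l r))
     - (u (pprefix o s.+1 :|: pprefix l r.+1) - u (pprefix o s :|: pprefix l r.+1)))).
  rewrite sumrB !telescope_sumr // pprefix0 pprefixT !set0U !setTU; ring.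
have hsum' : forall r : 'I_n, \sum_(s | s != i) bcoef u o l s r =
    (u (pprefix l r.+1) - u (pprefix l r)) - bcoef u o l i r.
  by move=> r; rewrite -hsum [in RHS](bigD1 i) //= addrAC subrr add0r.
have mce : modc cc [set o i] = cc (o i) by rewrite /modc big_set1.
set co := cc (o i).
set e := o i.
set O := pprefix o i.
pose U k := u (pprefix l k).
pose cL k := modc cc (pprefix l k).
pose h k := marg u e (O :|: pprefix l k).
have e1 : \sum_(r : 'I_n | (j <= r)%N) modc cc (pprefix l (r.+1)%N) * \sum_(s : 'I_n) bcoef u o l s r
   = \sum_(j <= r < n) cL r.+1 * (U r.+1 - U r).
  by rewrite -sum_geq; apply: eq_bigr => r _; rewrite hsum.
have e2 : \sum_(r : 'I_n | (j <= r)%N) bcoef u o l i r = \sum_(j <= r < n) (h r - h r.+1).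
  by rewrite -sum_geq; apply: eq_bigr => r _; rewrite hb.
have e3 : \sum_(r : 'I_n | (j <= r)%N)
           (modc cc [set o i] + modc cc (pprefix l (r.+1)%N)) *
             \sum_(s : 'I_n | s != i) bcoef u o l s r =
    \sum_(j <= r < n) (co + cL r.+1) * ((U r.+1 - U r) - (h r - h r.+1)).
  by rewrite -sum_geq; apply: eq_bigr => r _; rewrite hsum' hb mce.
rewrite e1 e2 e3 mce -/co -/(cL j).
have KEY : \sum_(j <= k < n) (cL k.+1 - cL k) * h k <= co * (U n - U j).
  pose g k := marg u e (pprefix l k).
  have UT : U n = u setT by rewrite /U pprefixT.
  have Uge : forall k, U k <= U n.
    by move=> k; rewrite UT; apply: mono_sub => //; exact: subsetT.
  apply: le_trans (_ : \sum_(j <= k < n) (cL k.+1 - cL k) * g k <= _).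
    apply: ler_sum_nat => k /andP[_ kn].
    have -> : cL k.+1 - cL k = cc (l (Ordinal kn)) by rewrite /cL (cLS _ _ cc l (Ordinal kn)).
    apply: ler_wpM2l; first exact: ltW.
    by apply: sub_sub => //; exact: subsetUr.
  pose m := (l^-1)%g e.
  have em : l m = e by rewrite permKV.
  case: (ltnP j m) => jm; last first.
    rewrite big_ltn ?ltn_ord // big_nat_cond big1 ?addr0; last first.
      move=> k /andP[/andP[jk kn] _]; rewrite /g marg_mem ?mulr0 // mem_pprefix.
      exact: leq_ltn_trans jm jk.
    rewrite (cLS _ _ cc l j).
    case: (eqVneq m j) => [mj|mj].
      have lj : l j = e by rewrite -mj em.
      rewrite lj; apply: ler_wpM2l; first exact: ltW.
      rewrite UT /g /marg /U lerD2r; apply: mono_sub => //; exact: subsetT.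
    rewrite /g marg_mem ?mulr0; last by rewrite mem_pprefix ltn_neqAle mj jm.
    by apply: mulr_ge0; [exact: ltW (hcc _) | rewrite subr_ge0].
  have mn : (m < n)%N := ltn_ord m.
  have jn1 : (j < n)%N := ltn_ord j.
  have := hl m j jm; move/negP; rewrite -leNgt => Hle.
  rewrite (seq_obj_abel _ _ _ _ _ i0) in Hle.
  have jP : (j <= size (perm_seq l))%N by rewrite size_perm_seq.
  have sz : size (pseudo_neighbor l m j) = n.+1.
    by rewrite /pseudo_neighbor size_cat /= size_drop size_takel // size_perm_seq addnS subnKC.
  have sT : [set x in pseudo_neighbor l m j] = setT.
    apply/setP => x; rewrite inE in_setT /pseudo_neighbor mem_cat in_cons orbCA.
    by rewrite -mem_cat cat_take_drop mem_perm_seq orbT.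
  have jle : (j <= n.+1)%N by rewrite leqW.
  rewrite sz sT (@big_cat_nat _ _ _ j 0 n.+1) // in Hle.
  rewrite (@big_ltn _ _ _ j n.+1) // big_add1 /= in Hle.
  have nthP : forall k (kn : (k < n)%N), nth i0 (perm_seq l) k = l (Ordinal kn).
    by move=> k kn; rewrite (nth_perm_seq _ _ _ (Ordinal kn)).
  have dcL : forall k (kn : (k < n)%N), cL k.+1 - cL k = cc (l (Ordinal kn)).
    by move=> k kn; rewrite /cL (cLS _ _ cc l (Ordinal kn)).
  have p1 : \sum_(0 <= k < j) cc (nth i0 (pseudo_neighbor l m j) k) *
       (u setT - u [set x in take k (pseudo_neighbor l m j)]) =
       \sum_(0 <= k < j) (cL k.+1 - cL k) * (U n - U k).
    apply: eq_big_nat => k /andP[_ kj].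
    have kn : (k < n)%N := ltn_trans kj jn1.
    rewrite /pseudo_neighbor nth_cat take_cat size_takel // kj (nth_take _ kj) (take_takel _ (ltnW kj)).
    by rewrite (nthP k kn) (dcL k kn) UT /U pprefix_take.
  have p2 : cc (nth i0 (pseudo_neighbor l m j) j) *
       (u setT - u [set x in take j (pseudo_neighbor l m j)]) = co * (U n - U j).
    rewrite /pseudo_neighbor nth_cat take_cat size_takel // ltnn subnn /= cats0.
    by rewrite em UT /U pprefix_take.
  have p3 : \sum_(j <= k < n) cc (nth i0 (pseudo_neighbor l m j) k.+1) *
       (u setT - u [set x in take k.+1 (pseudo_neighbor l m j)]) =
       \sum_(j <= k < n) (cL k.+1 - cL k) * (U n - u (e |: pprefix l k)).
    apply: eq_big_nat => k /andP[jk kn].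
    rewrite /pseudo_neighbor nth_cat take_cat size_takel // ltnNge (leqW jk) /= (subSn jk).
    rewrite /= nth_drop (subnKC jk) set_cat_cons -takeD (subnKC jk).
    by rewrite (nthP k kn) (dcL k kn) em UT pprefix_take.
  rewrite p1 p2 p3 in Hle.
  have po : perm_obj u cc l = \sum_(0 <= k < j) (cL k.+1 - cL k) * (U n - U k)
      + \sum_(j <= k < n) (cL k.+1 - cL k) * (U n - U k).
    rewrite /perm_obj -(big_mkord xpredT (fun k => modc cc (pprefix l k.+1) *
       (u (pprefix l k.+1) - u (pprefix l k)))).
    rewrite (abel1 _ (fun k => modc cc (pprefix l k)) (fun k => u (pprefix l k)));
      last by rewrite pprefix0 /modc big_set0.
    by rewrite (@big_cat_nat _ _ _ j 0 n).
  have eg : \sum_(j <= k < n) (cL k.+1 - cL k) * g k =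
     \sum_(j <= k < n) (cL k.+1 - cL k) * (U n - U k) -
     \sum_(j <= k < n) (cL k.+1 - cL k) * (U n - u (e |: pprefix l k)).
    rewrite -sumrB; apply: eq_bigr => k _; rewrite /g /marg /U; ring.
  rewrite po lerD2l in Hle.
  by rewrite eg lerBlDr.
have T1 : \sum_(j <= r < n) (U r.+1 - U r) = U n - U j by rewrite telescope_sumr.
have hn0 : h n = 0 by rewrite /h pprefixT setUT marg_mem ?in_setT.
have A2 := @abel2 _ cL h _ _ jn.
rewrite hn0 mulr0 subr0 in A2.
have X1 : \sum_(j <= r < n) (co + cL r.+1) * ((U r.+1 - U r) - (h r - h r.+1)) =
   co * \sum_(j <= r < n) (U r.+1 - U r) + \sum_(j <= r < n) cL r.+1 * (U r.+1 - U r)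
   - co * \sum_(j <= r < n) (h r - h r.+1) - \sum_(j <= r < n) cL r.+1 * (h r - h r.+1).
  rewrite !mulr_sumr -big_split -!sumrB /=; apply: eq_bigr => r _; ring.
have X2 : \sum_(j <= r < n) (cL r.+1 - cL j) * (h r - h r.+1) =
   \sum_(j <= r < n) cL r.+1 * (h r - h r.+1) - cL j * \sum_(j <= r < n) (h r - h r.+1).
  rewrite mulr_sumr -sumrB; apply: eq_bigr => r _; ring.
rewrite X1 T1 -subr_ge0.
set S1 := \sum_(j <= r < n) cL r.+1 * (U r.+1 - U r).
set S4 := \sum_(j <= r < n) cL r.+1 * (h r - h r.+1).
set H := \sum_(j <= r < n) (h r - h r.+1).
have -> : (co + cL j) * H + (co * (U n - U j) + S1 - co * H - S4) - S1 =
   co * (U n - U j) - (S4 - cL j * H) by ring.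
by rewrite -X2 A2 subr_ge0.
Qed.
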